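(* For each $0\le m<N$ there exists a total ordering $\leqslant_m$ on the real vector space $\mathbb R\Phi$, compatible with its vector space structure, such that $\gamma_i>_m0$ for $i\le m$ and $\gamma_i<_m0$ for $i>m$.
   Context: Let $\Phi$ be a finite indecomposable root system spanning the real vector space $\mathbb R\Phi$, with simple roots $\Pi$, positive roots $\Phi^+$, $N=|\Phi^+|$, Weyl group $W$ with longest element $w_0$. Fix a reduced expression $w_0=s_{\beta_1}\cdots s_{\beta_N}$ with $\beta_i\in\Pi$, set $w_i=s_{\beta_1}\cdots s_{\beta_{i-1}}$ and $\gamma_i=w_i(\beta_i)$, so that $\Phi^+=\{\gamma_1,\dots,\gamma_N\}$ is a convex ordering (if $\gamma_i+\gamma_j=\gamma_l$ with $i<j$ then $i<l<j$). *)

(* Defs.v *)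
From HB Require Import structures.
From mathcomp Require Import all_boot all_order all_algebra.
From mathcomp Require Import reals.
Set Implicit Arguments. Unset Strict Implicit. Unset Printing Implicit Defensive.
Import Order.TTheory GRing.Theory Num.Theory.
Local Open Scope ring_scope.

Section RootSystems.
Variables (R : realType) (n : nat).
Notation V := 'rV[R]_n.

Definition dot (u v : V) : R := (u *m v^T) 0 0.

Definition refl (a : V) (x : V) : V := x - ((2 * dot x a) / dot a a) *: a.

Definition root_system (Phi : seq V) : Prop :=
  [/\ uniq Phi /\ (0 : V) \notin Phi,
      (forall v : V, exists c : 'I_(size Phi) -> R,
          v = \sum_(i < size Phi) c i *: Phi`_i),
      (forall a b, a \in Phi -> b \in Phi -> refl a b \in Phi),
      (forall a b, a \in Phi -> b \in Phi ->
          exists z : int, (2 * dot b a) / dot a a = z%:~R) &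
      (forall a (c : R), a \in Phi -> c *: a \in Phi -> c = 1 \/ c = -1)].

Definition indecomposable (Phi : seq V) : Prop :=
  forall P : pred V,
    (forall a b, a \in Phi -> b \in Phi -> P a -> ~~ P b -> dot a b = 0) ->
    all P Phi \/ all (predC P) Phi.

Definition simple_roots (Phi Pi : seq V) : Prop :=
  [/\ uniq Pi, {subset Pi <= Phi},
      (forall c : 'I_(size Pi) -> R,
          \sum_(i < size Pi) c i *: Pi`_i = 0 -> forall i, c i = 0) &
      (forall a, a \in Phi -> exists c : 'I_(size Pi) -> int,
          a = \sum_(i < size Pi) (c i)%:~R *: Pi`_i /\
          ((forall i, (0 <= c i)%R) \/ (forall i, (c i <= 0)%R)))].

Definition prod_refl (s : seq V) : V -> V := foldr (fun a f => refl a \o f) id s.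

Definition reduced_word (Pi s : seq V) : Prop :=
  {subset s <= Pi} /\
  forall t : seq V, {subset t <= Pi} ->
    (forall v, prod_refl t v = prod_refl s v) -> (size s <= size t)%N.

Definition reduced_expr_w0 (Pi s : seq V) : Prop :=
  reduced_word Pi s /\
  forall t, reduced_word Pi t -> (size t <= size s)%N.

(* gamma_{k+1} = w_{k+1}(beta_{k+1}) = s_{beta_1} ... s_{beta_k} (beta_{k+1}),
   with 0-based index k *)
Definition gamma (beta : seq V) (k : nat) : V :=
  prod_refl (take k beta) (nth 0 beta k).

Definition total_vs_order (le : V -> V -> Prop) : Prop :=
  [/\ (forall x, le x x) /\
      (forall x y, le x y -> le y x -> x = y),
      (forall x y z, le x y -> le y z -> le x z),
      (forall x y, le x y \/ le y x),
      (forall x y z, le x y -> le (x + z) (y + z)) &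
      (forall x y (c : R), 0 < c -> le x y -> le (c *: x) (c *: y))].

End RootSystems.

(* Main.v *)
Require Import Defs.
From HB Require Import structures.
From mathcomp Require Import all_boot all_order all_algebra.
From mathcomp Require Import reals.
From mathcomp Require Import ring lra zify.
Set Implicit Arguments. Unset Strict Implicit. Unset Printing Implicit Defensive.
Import Order.TTheory GRing.Theory Num.Theory.
Local Open Scope ring_scope.



Section Basic.
Variables (R : realType) (n : nat).
Notation V := 'rV[R]_n.
Implicit Types (x y a b : V).

Lemma dotC x y : dot x y = dot y x.
Proof.
rewrite /dot; rewrite -[in RHS](trmxK (y *m x^T)) trmx_mul trmxK.
by rewrite [in RHS]mxE.
Qed.
Lemma dotDl x y a : dot (x + y) a = dot x a + dot y a.
Proof. by rewrite /dot mulmxDl mxE. Qed.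
Lemma dotZl (c : R) x a : dot (c *: x) a = c * dot x a.
Proof. by rewrite /dot -scalemxAl mxE. Qed.
Lemma dotNl x a : dot (- x) a = - dot x a.
Proof. by rewrite -scaleN1r dotZl mulN1r. Qed.
Lemma dotBl x y a : dot (x - y) a = dot x a - dot y a.
Proof. by rewrite dotDl dotNl. Qed.
Lemma dotDr x y a : dot a (x + y) = dot a x + dot a y.
Proof. by rewrite dotC dotDl !(dotC a). Qed.
Lemma dotZr (c : R) x a : dot a (c *: x) = c * dot a x.
Proof. by rewrite dotC dotZl dotC. Qed.
Lemma dotBr x y a : dot a (x - y) = dot a x - dot a y.
Proof. by rewrite dotC dotBl !(dotC a). Qed.

Lemma dot_gt0 x : x != 0 -> 0 < dot x x.
Proof.
move=> nz; rewrite /dot mxE.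
have H : forall j : 'I_n, true -> 0 <= x 0 j * x^T j 0.
  by move=> j _; rewrite mxE -expr2 sqr_ge0.
rewrite lt_def psumr_neq0 //= ?sumr_ge0 ?andbT //.
apply: contraNT nz => /hasPn Hn; apply/eqP/rowP => j; rewrite !mxE.
have := Hn j (mem_index_enum j); rewrite mxE -expr2 lt_def sqr_ge0 andbT negbK sqrf_eq0.
by move/eqP.
Qed.

Lemma reflD a x y : refl a (x + y) = refl a x + refl a y.
Proof. by rewrite /refl dotDl mulrDr mulrDl scalerDl opprD addrACA. Qed.
Lemma reflZ a (c : R) x : refl a (c *: x) = c *: refl a x.
Proof. rewrite /refl dotZl scalerBr scalerA; congr (_ - _ *: _); ring. Qed.
Lemma dot_refl a x : dot a a != 0 -> dot (refl a x) a = - dot x a.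
Proof.
move=> nz; rewrite /refl dotBl dotZl; by field.
Qed.
Lemma reflK a x : dot a a != 0 -> refl a (refl a x) = x.
Proof.
move=> nz; rewrite {1}/refl dot_refl // /refl.
rewrite mulrN mulNr scaleNr opprK subrK //.
Qed.
Lemma refl_dot a x y : dot a a != 0 -> dot (refl a x) (refl a y) = dot x y.
Proof.
move=> nz; rewrite /refl !dotBl !dotBr !dotZl !dotZr ?(dotC a y) ?(dotC a x).
by field.
Qed.
Lemma reflaa a : dot a a != 0 -> refl a a = - a.
Proof.
move=> nz; rewrite /refl mulfK // scaler_nat; by rewrite mulr2n opprD addrA subrr sub0r.
Qed.
End Basic.



Section Words.
Variables (R : realType) (n : nat).
Notation V := 'rV[R]_n.
Implicit Types (x y a b : V) (s t : seq V).

Lemma prod_refl_cons a s x : prod_refl (a :: s) x = refl a (prod_refl s x).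
Proof. by []. Qed.
Lemma prod_refl_nil x : prod_refl [::] x = x.
Proof. by []. Qed.
Lemma prod_refl_cat s t x : prod_refl (s ++ t) x = prod_refl s (prod_refl t x).
Proof. by elim: s => //= a s IH; rewrite /= -IH. Qed.
Lemma prod_reflD s x y : prod_refl s (x + y) = prod_refl s x + prod_refl s y.
Proof. by elim: s => //= a s IH; rewrite IH reflD. Qed.
Lemma prod_reflZ s (c : R) x : prod_refl s (c *: x) = c *: prod_refl s x.
Proof. by elim: s => //= a s IH; rewrite IH reflZ. Qed.
Lemma prod_reflN s x : prod_refl s (- x) = - prod_refl s x.
Proof. by rewrite -scaleN1r prod_reflZ scaleN1r. Qed.
Lemma prod_reflB s x y : prod_refl s (x - y) = prod_refl s x - prod_refl s y.
Proof. by rewrite prod_reflD prod_reflN. Qed.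
Lemma prod_refl0 s : prod_refl s 0 = 0.
Proof. by have := prod_reflB s 0 0; rewrite subrr => ->; rewrite subrr. Qed.

Definition goodw s := forall a, a \in s -> dot a a != 0.

Lemma goodw_cons a s : goodw (a :: s) -> dot a a != 0 /\ goodw s.
Proof. by move=> H; split=> [|b bs]; apply: H; rewrite inE ?eqxx ?bs ?orbT. Qed.

Lemma goodw_rev s : goodw s -> goodw (rev s).
Proof. by move=> H a; rewrite mem_rev; apply: H. Qed.

Lemma prod_refl_dot s x y : goodw s ->
  dot (prod_refl s x) (prod_refl s y) = dot x y.
Proof.
elim: s => //= a s IH /goodw_cons [Ha Hs].
by rewrite refl_dot // IH.
Qed.

Lemma prod_refl_conj s a x : goodw s ->
  refl (prod_refl s a) (prod_refl s x) = prod_refl s (refl a x).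
Proof.
move=> Hs; by rewrite /refl prod_reflB prod_reflZ !prod_refl_dot.
Qed.

Lemma prod_reflK s x : goodw s -> prod_refl (rev s) (prod_refl s x) = x.
Proof.
elim: s x => //= a s IH x /goodw_cons [Ha Hs].
by rewrite rev_cons -cats1 prod_refl_cat /= reflK // IH.
Qed.

Lemma prod_reflKV s x : goodw s -> prod_refl s (prod_refl (rev s) x) = x.
Proof.
move=> Hs; have := prod_reflK x (goodw_rev Hs); by rewrite revK.
Qed.

Lemma prod_refl_rev_eq s t : goodw s -> goodw t ->
  (forall v, prod_refl t v = prod_refl s v) ->
  forall v, prod_refl (rev t) v = prod_refl (rev s) v.
Proof.
move=> Hs Ht E v.
by rewrite -{1}(prod_reflKV v Hs) -E prod_reflK.
Qed.
End Words.



Section Roots.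
Variables (R : realType) (n : nat).
Notation V := 'rV[R]_n.
Variables (Phi Pi : seq V).
Hypothesis HPhi : root_system Phi.
Hypothesis HPi : simple_roots Phi Pi.
Implicit Types (x y a b : V) (s t : seq V).

Definition posr v := exists c : 'I_(size Pi) -> int,
  v = \sum_i (c i)%:~R *: Pi`_i /\ forall i, 0 <= c i.

Lemma Phi_nz a : a \in Phi -> dot a a != 0.
Proof.
case: HPhi => [[_ H0] _ _ _ _] aP.
have : a != 0 by apply: contraNneq H0 => <-.
by move/dot_gt0; rewrite lt0r => /andP[].
Qed.

Lemma Pi_Phi a : a \in Pi -> a \in Phi.
Proof. by case: HPi => _ H _ _; apply: H. Qed.

Lemma goodPi s : {subset s <= Pi} -> goodw s.
Proof. by move=> H a /H /Pi_Phi /Phi_nz. Qed.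

Lemma coef_uniq (c d : 'I_(size Pi) -> R) :
  \sum_i c i *: Pi`_i = \sum_i d i *: Pi`_i -> forall i, c i = d i.
Proof.
case: HPi => _ _ Hind _ E i.
apply/eqP; rewrite -subr_eq0; apply/eqP; apply: (Hind (fun i => c i - d i)).
by rewrite (eq_bigr (fun i => c i *: Pi`_i - d i *: Pi`_i)) ?sumrB ?E ?subrr // => j _; rewrite scalerBl.
Qed.

Lemma root_sign a : a \in Phi -> posr a \/ posr (- a).
Proof.
case: HPi => _ _ _ Hc aP; have [c [E [H|H]]] := Hc a aP.
  by left; exists c.
right; exists (fun i => - c i); split; last by move=> i; rewrite oppr_ge0.
rewrite E -sumrN; apply: eq_bigr => i _; by rewrite intrN scaleNr.
Qed.

Lemma posr_anti a : posr a -> posr (- a) -> a = 0.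
Proof.
move=> [c [Ec Hc]] [d [Ed Hd]].
have E : \sum_i ((c i)%:~R + (d i)%:~R) *: Pi`_i = \sum_(i < size Pi) (0:R) *: Pi`_i.
  rewrite (eq_bigr (fun i => (c i)%:~R *: Pi`_i + (d i)%:~R *: Pi`_i)); last by move=> i _; rewrite scalerDl.
  by rewrite big_split /= -Ec -Ed subrr; apply/esym/big1 => i _; rewrite scale0r.
have Z (i : 'I_(size Pi)) : c i = 0.
  have := coef_uniq E i; rewrite -intrD => /eqP; rewrite intr_eq0 => /eqP Hcd.
  have := Hc i; have := Hd i; lia.
by rewrite Ec big1 // => i _; rewrite Z scale0r.
Qed.

Lemma Pi_idx a : a \in Pi -> exists p : 'I_(size Pi), Pi`_p = a.
Proof.
move=> aP; have H : (index a Pi < size Pi)%N by rewrite index_mem.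
by exists (Ordinal H); rewrite /= nth_index.
Qed.

Lemma sum_delta (p : 'I_(size Pi)) (k : R) :
  \sum_i (if i == p then k else 0) *: Pi`_i = k *: Pi`_p.
Proof.
rewrite (bigD1 p) //= eqxx big1 ?addr0 // => i /negbTE ->; by rewrite scale0r.
Qed.

Lemma Pi_posr a : a \in Pi -> posr a.
Proof.
move=> /Pi_idx [p <-]; exists (fun i => (i == p)%:Z); split; last by move=> i; case: (i == p).
rewrite -[LHS]scale1r -(sum_delta p 1); apply: eq_bigr => i _; by case: (i == p).
Qed.

Lemma prod_refl_Phi s a : {subset s <= Phi} -> a \in Phi -> prod_refl s a \in Phi.
Proof.
case: HPhi => _ _ Hr _ _.
elim: s => //= b s IH Hs aP; apply: Hr; first by apply: Hs; rewrite inE eqxx.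
by apply: IH => // c cs; apply: Hs; rewrite inE cs orbT.
Qed.

Lemma simple_refl al be : al \in Pi -> be \in Phi -> posr be -> be != al ->
  posr (refl al be).
Proof.
move=> alP beP [c [Ec Hc]] neq.
have alPhi := Pi_Phi alP.
case: HPhi => _ _ Hr Hz Hred.
have [p Ep] := Pi_idx alP.
have [z Ez] := Hz _ _ alPhi beP.
have rP := Hr _ _ alPhi beP.
case: HPi => _ _ _ Hc'; have [d [Ed [Hd|Hd]]] := Hc' _ rP.
  by exists d.
exfalso.
pose e i := c i - (if i == p then z else 0).
have Ee : refl al be = \sum_i (e i)%:~R *: Pi`_i.
  rewrite /refl Ez Ec -Ep -(sum_delta p (z%:~R)) -sumrB; apply: eq_bigr => i _.
  by rewrite /e intrD intrN scalerBl; case: (i == p).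
have Hde (i : 'I_(size Pi)) : d i = e i.
  by apply/eqP; rewrite -(eqr_int R); apply/eqP; apply: (@coef_uniq (fun i => (d i)%:~R) (fun i => (e i)%:~R)); rewrite -Ed -Ee.
have Z (i : 'I_(size Pi)) : i != p -> c i = 0.
  move=> /negbTE Hi; have := Hde i; rewrite /e Hi subr0 => E.
  have := Hd i; have := Hc i; rewrite E; lia.
have Eb : be = (c p)%:~R *: al.
  rewrite Ec -Ep -sum_delta; apply: eq_bigr => i _.
  by case: eqVneq => [->|/Z ->] //; rewrite scale0r.
have := Hred al (c p)%:~R alPhi; rewrite -Eb => /(_ beP) [E1|E1].
  by move: neq; rewrite Eb E1 scale1r eqxx.
have := Hc p; have : (c p)%:~R = (-1 : int)%:~R :> R by rewrite E1.
move/eqP; rewrite eqr_int => /eqP ->; by [].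
Qed.
End Roots.



Section Weyl.
Variables (R : realType) (n : nat).
Notation V := 'rV[R]_n.
Variables (Phi Pi : seq V).
Hypothesis HPhi : root_system Phi.
Hypothesis HPi : simple_roots Phi Pi.
Implicit Types (x y a b : V) (s t : seq V).

Lemma sub_cons (b : V) s (P : seq V) : {subset b :: s <= P} -> b \in P /\ {subset s <= P}.
Proof. by move=> H; split=> [|c cs]; apply: H; rewrite inE ?eqxx ?cs ?orbT. Qed.

Lemma subPiPhi s : {subset s <= Pi} -> {subset s <= Phi}.
Proof. by move=> H a aP; apply: (Pi_Phi HPi); apply: H. Qed.

Lemma zero_notin : (0 : V) \notin Phi.
Proof. by case: HPhi => [[_ H] _ _ _ _]. Qed.

Lemma exchange s : {subset s <= Pi} -> forall al, al \in Pi ->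
  posr Pi (- prod_refl s al) ->
  exists t, [/\ {subset t <= Pi}, (size t < size s)%N &
     forall v, prod_refl t v = prod_refl s (refl al v)].
Proof.
elim: s => [|b s IH] Hs al alP Hneg.
  exfalso; have E := posr_anti HPi (Pi_posr alP) Hneg.
  by move: zero_notin; rewrite -E (Pi_Phi HPi alP).
have [bP sP] := sub_cons Hs.
have yP : prod_refl s al \in Phi.
  exact: (prod_refl_Phi HPhi (subPiPhi sP) (Pi_Phi HPi alP)).
have bnz := Phi_nz HPhi (Pi_Phi HPi bP).
case: (root_sign HPi yP) => [Hy|Hy].
  case: (eqVneq (prod_refl s al) b) => [Eb|Nb].
    exists s; split => //= v.
    rewrite -prod_refl_conj; last exact: (goodPi HPhi HPi sP).
    by rewrite Eb reflK.
  exfalso.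
  have H1 := simple_refl HPhi HPi bP yP Hy Nb.
  have E := posr_anti HPi H1 Hneg.
  have : refl b (prod_refl s al) \in Phi.
    by case: HPhi => _ _ Hr _ _; apply: Hr => //; exact: (Pi_Phi HPi bP).
  by rewrite E (negbTE zero_notin).
have [t [tP St Et]] := IH sP al alP Hy.
exists (b :: t); split => //=.
  by move=> c; rewrite inE => /orP [/eqP ->|]; [ | apply: tP].
by move=> v; rewrite Et.
Qed.

Lemma reduced_pos b u : reduced_word Pi (b :: u) ->
  prod_refl (rev u) b \in Phi /\ posr Pi (prod_refl (rev u) b).
Proof.
move=> [Hsub Hmin]; have [bP uP] := sub_cons Hsub.
have ruP : {subset rev u <= Pi} by move=> c; rewrite mem_rev; apply: uP.
have inP : prod_refl (rev u) b \in Phi.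
  exact: (prod_refl_Phi HPhi (subPiPhi ruP) (Pi_Phi HPi bP)).
split => //.
case: (root_sign HPi inP) => // Hneg.
have [t [tP St Et]] := exchange ruP bP Hneg.
have E : forall v, prod_refl t v = prod_refl (rev (b :: u)) v.
  by move=> v; rewrite Et rev_cons -cats1 prod_refl_cat.
have rbuP : {subset rev (b :: u) <= Pi} by move=> c; rewrite mem_rev; apply: Hsub.
have E2 := prod_refl_rev_eq (goodPi HPhi HPi rbuP) (goodPi HPhi HPi tP) E.
have rtP : {subset rev t <= Pi} by move=> c; rewrite mem_rev; apply: tP.
have := Hmin _ rtP; rewrite revK in E2; move/(_ E2).
rewrite size_rev in St; rewrite /= size_rev; lia.
Qed.

Lemma reduced_infix p q r : reduced_word Pi (p ++ q ++ r) -> reduced_word Pi q.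
Proof.
move=> [Hsub Hmin]; split.
  by move=> c cq; apply: Hsub; rewrite !mem_cat cq orbT.
move=> t tP Et.
have H : {subset p ++ t ++ r <= Pi}.
  move=> c; rewrite !mem_cat => /orP [H|/orP [H|H]]; first (by apply: Hsub; rewrite !mem_cat H);
    [by apply: tP | by apply: Hsub; rewrite !mem_cat H !orbT].
have := Hmin _ H; rewrite !size_cat.
have E : forall v, prod_refl (p ++ t ++ r) v = prod_refl (p ++ q ++ r) v.
  by move=> v; rewrite !prod_refl_cat Et.
move/(_ E); lia.
Qed.

Lemma reduced_rev s : reduced_word Pi s -> reduced_word Pi (rev s).
Proof.
move=> [Hsub Hmin]; split.
  by move=> c; rewrite mem_rev; apply: Hsub.
move=> t tP Et.
have rsP : {subset rev s <= Pi} by move=> c; rewrite mem_rev; apply: Hsub.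
have E2 := prod_refl_rev_eq (goodPi HPhi HPi rsP) (goodPi HPhi HPi tP) Et.
rewrite revK in E2.
have rtP : {subset rev t <= Pi} by move=> c; rewrite mem_rev; apply: tP.
by have := Hmin _ rtP E2; rewrite !size_rev.
Qed.
End Weyl.



Section Lex.
Variables (R : realType) (k : nat).
Implicit Types (u v : 'rV[R]_k) (s : seq 'I_k).

Fixpoint lexS u s : bool :=
  if s is i :: s' then (0 < u 0 i) || ((u 0 i == 0) && lexS u s') else true.

Lemma lexS_ge0 u i s : lexS u (i :: s) -> 0 <= u 0 i.
Proof. by move=> /= /orP [/ltW|/andP [/eqP -> _]]. Qed.

Lemma lexS0 s : lexS 0 s.
Proof. by elim: s => //= i s ->; rewrite mxE eqxx orbT. Qed.

Lemma lexS_add u v s : lexS u s -> lexS v s -> lexS (u + v) s.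
Proof.
elim: s => //= i s IH Hu Hv.
have u0 := lexS_ge0 Hu; have v0 := lexS_ge0 Hv.
move: Hu Hv => /orP [Hu|/andP [/eqP Hu Hu']] /orP [Hv|/andP [/eqP Hv Hv']]; rewrite mxE.
- by apply/orP; left; lra.
- by rewrite Hv addr0 Hu.
- by rewrite Hu add0r Hv.
- by rewrite Hu Hv addr0 eqxx IH // orbT.
Qed.

Lemma lexS_scale u (c : R) s : 0 < c -> lexS u s -> lexS (c *: u) s.
Proof.
move=> c0; elim: s => //= i s IH /orP [Hu|/andP [/eqP Hu Hu']]; rewrite mxE.
  by rewrite mulr_gt0.
by rewrite Hu mulr0 eqxx IH // orbT.
Qed.

Lemma lexS_tot u s : lexS u s \/ lexS (- u) s.
Proof.
elim: s => [|i s IH] /=; first by left.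
rewrite mxE oppr_gt0 oppr_eq0.
case: (ltgtP (u 0 i) 0) => H /=.
- by right.
- by left.
- exact: IH.
Qed.

Lemma lexS_anti u s : lexS u s -> lexS (- u) s -> forall i, i \in s -> u 0 i = 0.
Proof.
elim: s => //= i s IH H1 H2 j.
have a1 := lexS_ge0 H1; have a2 := lexS_ge0 H2; rewrite mxE oppr_ge0 in a2.
have E : u 0 i = 0 by apply/eqP; rewrite eq_le a2 a1.
rewrite inE => /orP [/eqP ->|js] //.
move: H1 H2; rewrite mxE E ltxx oppr0 ltxx eqxx /= => H1 H2.
exact: IH.
Qed.

Lemma lexS_cat u s1 s2 : (forall i, i \in s1 -> 0 <= u 0 i) ->
  ((forall i, i \in s1 -> u 0 i = 0) -> lexS u s2) -> lexS u (s1 ++ s2).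
Proof.
elim: s1 => [|i s1 IH] H1 H2 /=; first by apply: H2.
have := H1 i (mem_head _ _); rewrite le_eqVlt => /orP [/eqP E|->] //.
rewrite -E eqxx /=; apply/orP; right; apply: IH.
  by move=> j js; apply: H1; rewrite inE js orbT.
move=> Hz; apply: H2 => j; rewrite inE => /orP [/eqP ->|js]; [by [] | exact: Hz].
Qed.
End Lex.



Lemma exists_M (R : realType) (n : nat) (Phi Pi : seq 'rV[R]_n) :
  simple_roots Phi Pi ->
  exists M : 'M[R]_(n, size Pi), forall c : 'I_(size Pi) -> R,
    (\sum_i c i *: Pi`_i) *m M = \row_i c i.
Proof.
move=> HPi; case: (HPi) => _ _ Hind _.
pose P := \matrix_(i < size Pi, j < n) Pi`_i 0 j.
have rowP' i : row i P = Pi`_i by apply/rowP => j; rewrite !mxE.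
have sumE (c : 'I_(size Pi) -> R) : \sum_i c i *: Pi`_i = (\row_i c i) *m P.
  rewrite mulmx_sum_row; apply: eq_bigr => i _; by rewrite rowP' mxE.
have rf : row_free P.
  rewrite -kermx_eq0; apply/eqP.
  set K := kermx P.
  have KP : K *m P = 0.
    apply/sub_kermxP. exact: submx_refl.
  clearbody K.
  apply/matrixP => i j; rewrite [RHS]mxE.
  have : row i K *m P = 0.
    rewrite -row_mul KP; apply/rowP => k; by rewrite !mxE.
  rewrite mulmx_sum_row.
  under eq_bigr do rewrite rowP'.
  move/(Hind (fun j => row i K 0 j))/(_ j); by rewrite mxE.
have [M HM] := row_freeP rf.
exists M => c; by rewrite sumE -mulmxA HM mulmx1.
Qed.

Section Final.
Variables (R : realType) (n : nat).
Notation V := 'rV[R]_n.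
Variables (Phi Pi : seq V) (W : seq V) (M : 'M[R]_(n, size Pi)).
Hypothesis HW : goodw W.
Hypothesis HM : forall c : 'I_(size Pi) -> R, (\sum_i c i *: Pi`_i) *m M = \row_i c i.

Definition FF (x : V) : 'rV[R]_(size Pi + n) := row_mx ((- prod_refl W x) *m M) x.
Definition sI : seq 'I_(size Pi + n) :=
  [seq lshift n i | i <- enum 'I_(size Pi)] ++ [seq rshift (size Pi) j | j <- enum 'I_n].

Lemma FF_add x y : FF (x + y) = FF x + FF y.
Proof. by rewrite /FF prod_reflD opprD mulmxDl add_row_mx. Qed.
Lemma FF_scale (c : R) x : FF (c *: x) = c *: FF x.
Proof. by rewrite /FF prod_reflZ -scalerN -scalemxAl scale_row_mx. Qed.
Lemma FF_opp x : FF (- x) = - FF x.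
Proof. by rewrite -scaleN1r FF_scale scaleN1r. Qed.
Lemma FF0 : FF 0 = 0.
Proof. by rewrite /FF prod_refl0 oppr0 mul0mx row_mx0. Qed.

Lemma FF_inj x : (forall i, i \in sI -> FF x 0 i = 0) -> x = 0.
Proof.
move=> H; apply/rowP => j; rewrite mxE.
have := H (rshift (size Pi) j); rewrite /FF row_mxEr; apply.
by rewrite mem_cat; apply/orP; right; apply: map_f; rewrite mem_enum.
Qed.

Lemma FF_pos x : posr Pi (- prod_refl W x) -> lexS (FF x) sI.
Proof.
move=> [c [Ec Hc]].
have E : (- prod_refl W x) *m M = \row_i (c i)%:~R by rewrite Ec HM.
apply: lexS_cat.
  by move=> i /mapP [j _ ->]; rewrite /FF row_mxEl E mxE ler0z.
move=> Hz.
have cz j : (c j)%:~R = 0 :> R.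
  have := Hz (lshift n j); rewrite /FF row_mxEl E mxE; apply.
  by apply: map_f; rewrite mem_enum.
have : - prod_refl W x = 0 by rewrite Ec big1 // => j _; rewrite cz scale0r.
move/eqP; rewrite oppr_eq0 => /eqP Wx.
have -> : x = 0 by rewrite -(prod_reflK x HW) Wx prod_refl0.
by rewrite FF0 lexS0.
Qed.

Lemma FF_order : total_vs_order (fun x y => lexS (FF (y - x)) sI).
Proof.
have Fneg x y : FF (x - y) = - FF (y - x) by rewrite -FF_opp opprB.
split.
- split=> [x|x y H1 H2]; first by rewrite subrr FF0 lexS0.
  rewrite Fneg in H2.
  have := FF_inj (lexS_anti H1 H2) => /eqP; rewrite subr_eq0 => /eqP //.
- move=> x y z H1 H2.
  by rewrite -(subrKA y) addrC FF_add lexS_add.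
- move=> x y; case: (lexS_tot (FF (y - x)) sI) => H; [left | right] => //.
  by rewrite Fneg.
- move=> x y z H; by rewrite opprD addrACA subrr addr0.
- move=> x y c c0 H; by rewrite -scalerBr FF_scale lexS_scale.
Qed.
End Final.



Theorem lemma3p3p2 (R : realType) (n : nat) (Phi Pi beta : seq 'rV[R]_n) :
  root_system Phi -> indecomposable Phi -> simple_roots Phi Pi ->
  reduced_expr_w0 Pi beta ->
  forall m : nat, (m < size beta)%N ->
  exists le : 'rV[R]_n -> 'rV[R]_n -> Prop,
    total_vs_order le /\
    (forall k : nat, (k < size beta)%N ->
       if (k < m)%N then le 0 (gamma beta k) /\ gamma beta k <> 0
       else le (gamma beta k) 0 /\ gamma beta k <> 0).
Proof.
move=> HPhi _ HPi [Hred _] m Hm.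
have [M HM] := exists_M HPi.
have bP : {subset beta <= Pi} by case: Hred.
have tmP : {subset take m beta <= Pi} by move=> c /mem_take; apply: bP.
have gtm : goodw (take m beta) by apply: (goodPi HPhi HPi tmP).
have W_good : goodw (rev (take m beta)) by apply: goodw_rev.
exists (fun x y => lexS (FF (rev (take m beta)) M (y - x)) (sI Pi)).
split; first exact: FF_order.
move=> k Hk.
set b := nth 0 beta k.
set W := rev (take m beta).
have Hnz : forall y, y \in Phi -> prod_refl W (gamma beta k) = y \/
     prod_refl W (gamma beta k) = - y -> gamma beta k <> 0.
  move=> y yP Hy E; move: Hy; rewrite E prod_refl0 => Hy.
  have : y = 0 by case: Hy => // /eqP; rewrite eq_sym oppr_eq0 => /eqP.
  by move=> y0; move: (zero_notin HPhi); rewrite -y0 yP.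
case: ifP => Hkm.
  set u := drop k.+1 (take m beta).
  have szm : size (take m beta) = m by rewrite size_takel // ltnW.
  have E1 : take m beta = take k beta ++ b :: u.
    rewrite -{1}(cat_take_drop k (take m beta)) take_takel ?(ltnW Hkm) //.
    by rewrite (drop_nth 0) ?szm // nth_take.
  have Hr : reduced_word Pi (b :: u).
    apply: (@reduced_infix _ _ Pi (take k beta) _ (drop m beta)).
    by rewrite catA -E1 cat_take_drop.
  have [yP ypos] := reduced_pos HPhi HPi Hr.
  have tkP : {subset take k beta <= Pi} by move=> c /mem_take; apply: bP.
  have EW : prod_refl W (gamma beta k) = - prod_refl (rev u) b.
    rewrite /W E1 rev_cat rev_cons -cats1 /gamma -/b -catA !prod_refl_cat.
    rewrite prod_reflK; last exact: (goodPi HPhi HPi tkP).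
    rewrite /= reflaa ?prod_reflN //.
    by apply: (Phi_nz HPhi); apply: (Pi_Phi HPi); apply: bP; rewrite mem_nth.
  split; last by apply: (Hnz _ yP); right.
  rewrite subr0; apply: FF_pos => //.
  by rewrite EW opprK.
set v := drop m (take k beta).
have Hmk : (m <= k)%N by rewrite leqNgt Hkm.
have E1 : take k beta = take m beta ++ v.
  by rewrite -{1}(cat_take_drop m (take k beta)) take_takel.
have E2 : beta = take m beta ++ (v ++ [:: b]) ++ drop k.+1 beta.
  by rewrite -catA /= -/b -(drop_nth 0 Hk) catA -E1 cat_take_drop.
have Hr : reduced_word Pi (b :: rev v).
  have H1 : reduced_word Pi (v ++ [:: b]).
    by apply: (@reduced_infix _ _ Pi (take m beta) _ (drop k.+1 beta)); rewrite -E2.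
  by have := reduced_rev HPhi HPi H1; rewrite rev_cat.
have [yP ypos] := reduced_pos HPhi HPi Hr.
rewrite revK in yP ypos.
have EW : prod_refl W (gamma beta k) = prod_refl v b.
  by rewrite /W /gamma -/b E1 prod_refl_cat prod_reflK.
split; last by apply: (Hnz _ yP); left.
rewrite sub0r; apply: FF_pos => //.
by rewrite prod_reflN opprK EW.
Qed.
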